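(* Let $n\ge 1$, $A\in\mathbb{R}^{n\times n}$ and $C\in\mathbb{R}^{1\times n}$, with $(A,C)$ an observable pair and all eigenvalues of $A$ nonzero. Let $t_1,\ldots,t_n$ be nonnegative integers such that the matrix with rows $CA^{t_1},\ldots,CA^{t_n}$ has rank less than $n$. Then for every positive integer $\Delta$ that is not a pathological sampling period of $A$, the matrix with rows $CA^{t_1},\ldots,CA^{t_n},CA^{t_1+\Delta},\ldots,CA^{t_n+\Delta}$ has strictly larger rank than the matrix with rows $CA^{t_1},\ldots,CA^{t_n}$.
   Context: Setting: discrete-time single-output system $x(t+1)=Ax(t)+Bu(t)$, $y(t)=Cx(t)+Du(t)$ with output measured at selected time instances; matrices with rows $CA^{t_i}$ are sample-based observability matrices. $(A,C)$ observable means the matrix with rows $C,CA,\ldots,CA^{n-1}$ has rank $n$. A positive integer $h$ is a pathological sampling period of $A$ if there exist two distinct eigenvalues $\lambda_p\neq\lambda_q$ of $A$ in different Jordan blocks with $\lambda_p^h=\lambda_q^h$. *)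

(* Defs.v *)
From HB Require Import structures.
From mathcomp Require Import all_boot all_order all_algebra.
From mathcomp Require Import reals.
From mathcomp Require Import complex.
Set Implicit Arguments. Unset Strict Implicit. Unset Printing Implicit Defensive.
Import Order.TTheory GRing.Theory Num.Theory.
Local Open Scope ring_scope.

Definition cmx (R : realType) (n : nat) (A : 'M[R]_n) : 'M[R[i]]_n :=
  map_mx (fun x : R => (x%:C)%C) A.

Definition ceig (R : realType) (n : nat) (A : 'M[R]_n) (l : R[i]) : Prop :=
  eigenvalue (cmx A) l.

Definition sample_obs (R : realType) (n k : nat) (A : 'M[R]_n) (C : 'rV[R]_n)
  (t : 'I_k -> nat) : 'M[R]_(k, n) :=
  \matrix_(i < k) (C *m A ^+ t i).

Definition obs_mx (R : realType) (n : nat) (A : 'M[R]_n) (C : 'rV[R]_n)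
  : 'M[R]_n := sample_obs A C (fun i : 'I_n => nat_of_ord i).

Definition observable (R : realType) (n : nat) (A : 'M[R]_n) (C : 'rV[R]_n)
  : Prop := \rank (obs_mx A C) = n.

(* h is a pathological sampling period of A: there are two distinct
   eigenvalues (hence lying in different Jordan blocks) with equal h-th powers. *)
Definition pathological (R : realType) (n : nat) (A : 'M[R]_n) (h : nat)
  : Prop :=
  (0 < h)%N /\
  exists lp lq : R[i], [/\ ceig A lp, ceig A lq, lp != lq & lp ^+ h = lq ^+ h].

(* Main.v *)
Require Import Defs.
From HB Require Import structures.
From mathcomp Require Import all_boot all_order all_algebra zify.
From mathcomp Require Import reals.
From mathcomp Require Import complex.
Import Order.TTheory GRing.Theory Num.Theory.
Local Open Scope ring_scope.
Set Implicit Arguments. Unset Strict Implicit. Unset Printing Implicit Defensive.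
Lemma key_size (F : closedFieldType) (D : nat) : (D%:R : F) != 0 ->
  forall (P S : {poly F}), S != 0 -> P != 0 ->
  (forall a, root P a -> a != 0) ->
  (forall a b, root P a -> root P b -> a ^+ D = b ^+ D -> a = b) ->
  P %| S \Po 'X^D -> (size P <= size S)%N.
Proof.
move=> D0 P S; move: {2}(size P) (leqnn (size P)) => k.
elim: k P S => [|k IH] P S hk S0 P0 Pn0 Pinj dPS.
  by move: hk; rewrite leqn0 size_poly_eq0 (negPf P0).
have [P1|] := leqP (size P) 1%N.
  by apply: leq_trans P1 _; rewrite size_poly_gt0.
move=> P1; have /closed_rootP [l rl] : size P != 1%N by rewrite gtn_eqF.
have /factor_theorem [Q PQ] := rl.
have rS : root S (l ^+ D).
  by have := root_dvdp dPS rl; rewrite /root horner_comp hornerXn.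
have /factor_theorem [S1 SS1] := rS.
pose h : {poly F} := \sum_(i < D) 'X ^+ (D.-1 - i) * l%:P ^+ i.
have hE x : h.[x] = \sum_(i < D) x ^+ (D.-1 - i) * l ^+ i.
  rewrite /h horner_sum; apply: eq_bigr => i _.
  by rewrite hornerM hornerXn -rmorphXn /= hornerC.
have compE : S \Po 'X^D = ((S1 \Po 'X^D) * h) * ('X - l%:P).
  rewrite SS1 comp_polyM comp_polyB comp_polyX comp_polyC rmorphXn /=.
  by rewrite subrXX /h -mulrA; congr (_ * _); rewrite mulrC.
have Xl0 : ('X - l%:P) != 0 by rewrite polyXsubC_eq0.
have Q0 : Q != 0 by apply: contraNneq P0 => Q0; rewrite PQ Q0 mul0r.
have S10 : S1 != 0 by apply: contraNneq S0 => S10; rewrite SS1 S10 mul0r.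
have rQP x : root Q x -> root P x by move=> rx; rewrite PQ rootM rx.
have cop : coprimep Q h.
  apply: Pdiv.ClosedField.root_coprimep => x rx; apply/negP => /eqP hx0.
  have xl : x = l.
    apply: Pinj => //; first exact: rQP.
    by apply/eqP; rewrite -subr_eq0 subrXX -hE hx0 mulr0.
  move: hx0; rewrite hE xl.
  have -> : \sum_(i < D) l ^+ (D.-1 - i) * l ^+ i = l ^+ D.-1 *+ D.
    rewrite -[in RHS](card_ord D) -sumr_const; apply: eq_bigr => i _.
    rewrite -exprD subnK ?card_ord // -ltnS; exact: leq_trans (ltn_ord i) (leqSpred _).
  move/eqP; rewrite -mulr_natr mulf_eq0 (negPf D0) orbF expf_eq0.
  by rewrite (negPf (Pn0 _ rl)) andbF.
have dQ : Q %| (S1 \Po 'X^D).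
  by rewrite -(Gauss_dvdpl _ cop) -(dvdp_mul2r _ _ Xl0) -compE -PQ.
have sQ : (size Q < size P)%N.
  by rewrite PQ size_Mmonic ?monicXsubC // size_XsubC addn2.
have := IH Q S1 _ S10 Q0 (fun a ra => Pn0 a (rQP a ra))
  (fun a b ra rb => Pinj a b (rQP a ra) (rQP b rb)) dQ.
rewrite PQ SS1 !size_Mmonic ?monicXsubC // !size_XsubC !addn2 /=.
by move=> H; rewrite ltnS; apply: H; rewrite -ltnS (leq_trans sQ hk).
Qed.

Theorem lemma5 (R : realType) (n : nat) (A : 'M[R]_n) (C : 'rV[R]_n)
  (t : 'I_n -> nat) :
  (0 < n)%N ->
  observable A C ->
  (forall l : R[i], ceig A l -> l != 0) ->
  (\rank (sample_obs A C t) < n)%N ->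
  forall Delta : nat, (0 < Delta)%N -> ~ pathological A Delta ->
  (\rank (sample_obs A C t) <
   \rank (col_mx (sample_obs A C t)
                 (sample_obs A C (fun i => (t i + Delta)%N))))%N.
Proof.
case: n A C t => [//|n'] A C t _ obsAC eig0 rk D D0 npath.
set O := sample_obs A C t.
set B := A ^+ D.
have Au : A \in unitmx.
  have Hk : ~~ eigenvalue (cmx A) 0 by apply/negP => /eig0; rewrite eqxx.
  move: Hk; rewrite /eigenvalue /eigenspace /= negbK (_ : 0%:M = 0); last first.
    by apply/matrixP => i j; rewrite !mxE mul0rn.
  by rewrite subr0 kermx_eq0 row_free_unit /cmx map_unitmx.
have hornerComp p : horner_mx A (p \Po 'X^D) = horner_mx B p.
  elim/poly_ind: p => [|p c IH]; first by rewrite comp_poly0 !rmorph0.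
  rewrite comp_polyD comp_polyM comp_polyX comp_polyC !rmorphD !rmorphM /= IH.
  by rewrite horner_mx_X !horner_mx_C rmorphXn /= horner_mx_X.
have dvdAB : mxminpoly A %| mxminpoly B \Po 'X^D.
  by apply: mxminpoly_min; rewrite hornerComp mx_root_minpoly.
have sz : (degree_mxminpoly A <= degree_mxminpoly B)%N.
  rewrite -ltnS -size_mxminpoly -(size_mxminpoly B).
  rewrite -(size_map_poly (real_complex R) (mxminpoly A)).
  rewrite -(size_map_poly (real_complex R) (mxminpoly B)).
  rewrite -(mxminpoly_map (real_complex R) A) -(mxminpoly_map (real_complex R) B).
  apply: (@key_size _ D).
  - by rewrite -(rmorph_nat (real_complex R)) fmorph_eq0 pnatr_eq0 -lt0n.
  - exact: monic_neq0 (mxminpoly_monic _).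
  - exact: monic_neq0 (mxminpoly_monic _).
  - have cmxE : cmx A = map_mx (real_complex R) A by [].
    move=> a; rewrite -eigenvalue_root_min => ea. apply: eig0. rewrite /ceig cmxE. exact: ea.
  - have cmxE : cmx A = map_mx (real_complex R) A by [].
    move=> a b; rewrite -!eigenvalue_root_min => ea eb eab.
    apply/eqP/negPn/negP => ne; apply: npath; split => //.
    exists a, b; split; [rewrite /ceig cmxE; exact: ea | rewrite /ceig cmxE; exact: eb | exact: ne | exact: eab].
  - rewrite (mxminpoly_map (real_complex R) A) (mxminpoly_map (real_complex R) B).
    rewrite -[X in _ \Po X](map_polyXn (real_complex R)).
    by rewrite -(map_comp_poly (real_complex R)) (dvdp_map (real_complex R)).
set dA := degree_mxminpoly A; set dB := degree_mxminpoly B.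
have sBA : (powers_mx B dB <= powers_mx A dA)%MS.
  apply/row_subP => i; rewrite rowK /B -exprM.
  have -> : A ^+ (D * i) = horner_mx A ('X^(D * i)).
    by rewrite rmorphXn /= horner_mx_X.
  exact: horner_mx_mem.
have rA : \rank (powers_mx A dA) = dA := eqP (minpoly_mx_free A).
have rB : \rank (powers_mx B dB) = dB := eqP (minpoly_mx_free B).
have eqBA : (powers_mx A dA <= powers_mx B dB)%MS.
  by rewrite -(geq_leqif (mxrank_leqif_sup sBA)) rA rB.
have Amem : (A \in powers_mx B dB)%MS.
  apply: submx_trans eqBA; have := horner_mx_mem A 'X; by rewrite horner_mx_X.
have AB : horner_mx B (mx_inv_horner B A) = A := mx_inv_hornerK Amem.
rewrite ltnNge; apply/negP => Hle.
have sub1 : (O <= col_mx O (sample_obs A C (fun i => (t i + D)%N)))%MS.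
  by rewrite -addsmxE addsmxSl.
have csub : (col_mx O (sample_obs A C (fun i => (t i + D)%N)) <= O)%MS.
  by rewrite -(geq_leqif (mxrank_leqif_sup sub1)).
have stB : stablemx O B.
  move: csub; rewrite col_mx_sub => /andP[_].
  suff -> : sample_obs A C (fun i => (t i + D)%N) = O *m B by [].
  apply/row_matrixP => i; rewrite row_mul !rowK.
  by rewrite exprD -mulmxE mulmxA.
have stA : stablemx O A by rewrite -AB; apply: horner_mx_stable.
have stAk k : stablemx O (A ^+ k).
  elim: k => [|k IH]; first exact: stablemxC 1.
  by rewrite exprSr -mulmxE; apply: stablemxM.
have obsSub : (obs_mx A C *m A ^+ t ord0 <= O)%MS.
  apply/row_subP => i.
  have E : A ^+ i *m A ^+ t ord0 = A ^+ t ord0 *m A ^+ i.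
    by rewrite mulmxE -!exprD addnC.
  rewrite row_mul rowK -mulmxA E mulmxA.
  apply: submx_trans (stAk i); apply: submxMr.
  by have := row_sub ord0 O; rewrite rowK.
have := mxrankS obsSub; rewrite mxrankMfree ?row_free_unit ?unitrX //.
by rewrite obsAC => h; have := leq_ltn_trans h rk; rewrite ltnn.
Qed.
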